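(* Let $\mathcal{K}$ be a connected simplicial complex and $d$ a path-dominated distance function on $\mathrm{vert}(\mathcal{K})$. Then for any two vertices $x,y$ there exists a path-dominated shortest path from $x$ to $y$.
   Context: A function $d:\mathrm{vert}(\mathcal{K})\times\mathrm{vert}(\mathcal{K})\to\mathbb{R}_{\ge0}$ is a path-dominated distance function if (i) $d(x,y)\ge0$ and $d(x,x)=0$ for all vertices, and (ii) for any vertices $x,y$ there is a path $\pi^*$ from $x$ to $y$ in the $1$-skeleton with $d(x,y)=\max_{u\in\mathrm{vert}(\pi^* )}d(x,u)$. A path $\langle u_0=x,u_1,\dots,u_k=y\rangle$ along edges of $\mathcal{K}$ is a path-dominated shortest path if $d(x,u_i)=\max_{j\le i}d(x,u_j)$ for each $i\in[1,k]$. *)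

(* Defs.v *)
From HB Require Import structures.
From mathcomp Require Import all_boot all_order all_algebra.
Set Implicit Arguments. Unset Strict Implicit. Unset Printing Implicit Defensive.
Import Order.TTheory GRing.Theory Num.Theory.
Local Open Scope ring_scope.

(* A (finite, abstract) simplicial complex on the vertex type V:
   a family K of nonempty faces, closed under taking nonempty subsets,
   whose vertex set vert(K) = {v | {v} \in K} is all of V. *)
Definition simplicial_complex (V : finType) (K : {set {set V}}) : Prop :=
  [/\ (forall s, s \in K -> s != set0),
      (forall s t : {set V}, s \in K -> t \subset s -> t != set0 -> t \in K)
    & (forall v : V, [set v] \in K)].

Definition skel_edge (V : finType) (K : {set {set V}}) : rel V :=
  fun u v => (u != v) && ([set u; v] \in K).

(* p is (the tail of) a path  x = u_0, u_1, ..., u_k = y  in the 1-skeleton;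
   its vertex list is x :: p. *)
Definition skel_path (V : finType) (K : {set {set V}}) (x y : V) (p : seq V) : bool :=
  path (skel_edge K) x p && (last x p == y).

Definition connected_complex (V : finType) (K : {set {set V}}) : Prop :=
  forall x y : V, exists p : seq V, skel_path K x y p.

(* maximum of d over a finite list of vertices (d takes values >= 0) *)
Definition dmax (R : realDomainType) (V : finType) (d : V -> V -> R) (x : V) (s : seq V) : R :=
  \big[Num.max/0]_(u <- s) d x u.

Definition path_dominated_distance (R : realDomainType) (V : finType)
  (K : {set {set V}}) (d : V -> V -> R) : Prop :=
  [/\ (forall x y, 0 <= d x y),
      (forall x, d x x = 0)
    & (forall x y, exists p : seq V, skel_path K x y p /\ d x y = dmax d x (x :: p))].

Definition pd_shortest_path (R : realDomainType) (V : finType)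
  (K : {set {set V}}) (d : V -> V -> R) (x y : V) (p : seq V) : Prop :=
  skel_path K x y p /\
  (forall i : nat, (0 < i <= size p)%N ->
     d x (nth x (x :: p) i) = dmax d x (take i.+1 (x :: p))).

(* Main.v *)
Require Import Defs.
From mathcomp Require Import all_boot all_order all_algebra.
Import Order.TTheory GRing.Theory Num.Theory.
Local Open Scope ring_scope.
Set Implicit Arguments. Unset Strict Implicit.

Lemma path_last_le (R : realDomainType) (V : finType) (d : V -> V -> R) x :
  forall t a, path (fun u v => d x u <= d x v) a t -> d x a <= d x (last a t).
Proof.
elim=> [|b t IH] a //=; move/andP=> [hab ht].
exact: le_trans hab (IH _ ht).
Qed.

Lemma dmax_path (R : realDomainType) (V : finType) (d : V -> V -> R) x :
  (forall y, 0 <= d x y) ->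
  forall t a, path (fun u v => d x u <= d x v) a t -> dmax d x (a :: t) = d x (last a t).
Proof.
move=> d0; elim=> [|b t IH] a /=.
  by move=> _; rewrite /dmax big_cons big_nil max_l.
move/andP=> [hab ht].
rewrite /dmax big_cons -/(dmax d x (b :: t)) IH // max_r //.
exact: le_trans hab (path_last_le ht).
Qed.

Lemma last_take_nth (V : Type) (p : seq V) :
  forall x i, (i <= size p)%N -> last x (take i p) = nth x (x :: p) i.
Proof.
elim: p => [|a p IH] x [|i] //= hi.
rewrite IH //; exact: set_nth_default.
Qed.

Lemma le_dmax (R : realDomainType) (V : finType) (d : V -> V -> R) x s u :
  u \in s -> d x u <= dmax d x s.
Proof.
elim: s => [|a s IH] //=; rewrite inE /dmax big_cons => /orP [/eqP->|h].
  by rewrite le_max lexx.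
by rewrite le_max -/(dmax d x s) IH ?orbT.
Qed.

Theorem claim2 (R : realDomainType) (V : finType) (K : {set {set V}})
  (d : V -> V -> R) :
  simplicial_complex K -> connected_complex K -> path_dominated_distance K d ->
  forall x y : V, exists p : seq V, pd_shortest_path K d x y p.
Proof.
move=> _ _ [d0 dxx pd] x.
pose le := fun u v => d x u <= d x v.
pose M y := exists p, [&& path (skel_edge K) x p, last x p == y & path le x p].
pose c y := #|[set v | d x v < d x y]|.
have cl : forall w y, d x w < d x y -> (c w < c y)%N.
  move=> w y h; apply: proper_card; apply/properP; split.
    apply/subsetP=> v; rewrite !inE => hv; exact: lt_trans hv h.
  by exists w; rewrite !inE ?h ?ltxx.
have ext : forall a w, M a -> skel_edge K a w -> d x a <= d x w -> M w.
  move=> a w [p /and3P [h1 /eqP h2 h3]] e l; exists (rcons p w).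
  by rewrite !rcons_path last_rcons h1 h3 h2 e eqxx /le l.
have allM : forall n y, (c y <= n)%N -> M y.
  elim=> [|n IHn] y hy.
  -
    have [q [/andP [hq /eqP hl] hd]] := pd x y.
    suff: forall a, M a -> d x a <= d x y -> path (skel_edge K) a q ->
        (forall u, u \in q -> d x u <= d x y) -> M (last a q).
      move=> H; rewrite -hl; apply: H.
      + by exists [::]; rewrite /= eqxx.
      + by rewrite dxx d0.
      + exact: hq.
      + by move=> u hu; rewrite hd; apply: le_dmax; rewrite inE hu orbT.
    elim: q {hq hl hd} => [|w q IH] a //= Ma la /andP [e hq] hu.
    apply: IH => //; last by move=> u hu'; apply: hu; rewrite inE hu' orbT.
      have hw : d x w <= d x y by apply: hu; rewrite inE eqxx.
      case: (ltP (d x w) (d x y)) => h.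
        by move: (cl _ _ h); rewrite leqn0 in hy; rewrite (eqP hy).
      apply: ext Ma e _; exact: le_trans la h.
    by apply: hu; rewrite inE eqxx.
  - have [q [/andP [hq /eqP hl] hd]] := pd x y.
    suff: forall a, M a -> d x a <= d x y -> path (skel_edge K) a q ->
        (forall u, u \in q -> d x u <= d x y) -> M (last a q).
      move=> H; rewrite -hl; apply: H.
      + by exists [::]; rewrite /= eqxx.
      + by rewrite dxx d0.
      + exact: hq.
      + by move=> u hu; rewrite hd; apply: le_dmax; rewrite inE hu orbT.
    elim: q {hq hl hd} => [|w q IH] a //= Ma la /andP [e hq] hu.
    apply: IH => //; last by move=> u hu'; apply: hu; rewrite inE hu' orbT.
      case: (ltP (d x w) (d x y)) => h.
        apply: IHn; rewrite -ltnS; exact: leq_trans (cl _ _ h) hy.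
      apply: ext Ma e _; exact: le_trans la h.
    by apply: hu; rewrite inE eqxx.
move=> y; have [p /and3P [h1 h2 h3]] := allM _ y (leqnn _).
exists p; split; first by rewrite /skel_path h1 h2.
move=> i /andP [_ hi].
have hx : 0 <= d x x by rewrite dxx.
rewrite take_cons dmax_path //.
  by rewrite last_take_nth.
move: h3; rewrite -{1}(cat_take_drop i p) cat_path => /andP [] //.
Qed.
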